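(* Let $D^2=\{z\in\mathbb{C}: |z|\le 1\}$ be the closed unit disk with the Euclidean topology, and take starting points $l=0$ (lion) and $m=1$ (man). Then the man has a strategy in $D^2$. Moreover, there is such a strategy $S:P_0(D^2)\to P_1(D^2)$ for which the man stays on the boundary of the disk during the whole pursuit, i.e. $|S(\beta)(t)|=1$ for all $\beta\in P_0(D^2)$ and all $t\ge 0$.
   Context: For a topological space $X$ and $x\in X$, let $P_x(X)$ be the set of continuous maps $\gamma:[0,+\infty)\to X$ with $\gamma(0)=x$. For $\gamma\in P_x(X)$ and $t\ge 0$, write $\gamma_{<t}=\gamma|_{[0,t)}$ and $\gamma_{\le t}=\gamma|_{[0,t]}$. Given starting points $m$ (man) and $l$ (lion) in $X$, a strategy for the man is a function $S:P_l(X)\to P_m(X)$ such that (i) for each $\beta\in P_l(X)$ and each $t\ge 0$, $S(\beta)(t)\neq\beta(t)$; and (ii) (no-lookahead rule) whenever $\beta,\beta'\in P_l(X)$ and $t\ge0$ satisfy $\beta_{<t}=\beta'_{<t}$, then $S(\beta)_{\le t}=S(\beta')_{\le t}$. No speed bound is imposed on the paths. The Axiom of Choice is assumed. *)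

(* Defs.v *)
From Stdlib Require Import Reals.
From Coquelicot Require Import Coquelicot.
Open Scope R_scope.

Definition disk (z : C) : Prop := Cmod z <= 1.

(* A path g : [0,+oo) -> X starting at x, with X a subset of C carrying the
   subspace (Euclidean) topology.  Paths are represented as functions R -> C;
   only their values on [0,+oo) matter.  Continuity of g : [0,+oo) -> X is
   continuity at every t >= 0 within [0,+oo). *)
Definition is_path_from (X : C -> Prop) (x : C) (g : R -> C) : Prop :=
  g 0 = x /\
  (forall t, 0 <= t -> X (g t)) /\
  (forall t, 0 <= t ->
     filterlim g (within (fun s => 0 <= s) (locally t)) (locally (g t))).

Definition is_strategy (X : C -> Prop) (m l : C)
    (S : (R -> C) -> (R -> C)) : Prop :=
  (forall b, is_path_from X l b -> is_path_from X m (S b)) /\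
  (forall b, is_path_from X l b -> forall t, 0 <= t -> S b t <> b t) /\
  (forall b b' t, is_path_from X l b -> is_path_from X l b' -> 0 <= t ->
     (forall s, 0 <= s < t -> b s = b' s) ->
     forall s, 0 <= s <= t -> S b s = S b' s).

(* Main.v *)
Require Import Defs.
From Stdlib Require Import Reals Lra Psatz ClassicalEpsilon Classical.
From Coquelicot Require Import Coquelicot.
Open Scope R_scope.

Section Tool.
Context {T : Type} {F : (T -> Prop) -> Prop} {FF : Filter F}.

Lemma lim_plus (f g : T -> R) a c :
  filterlim f F (locally a) -> filterlim g F (locally c) ->
  filterlim (fun x => f x + g x) F (locally (a + c)).
Proof.
  intros Hf Hg.
  apply (filterlim_comp_2 f g Rplus Hf Hg).
  apply (@filterlim_plus R_AbsRing R_NormedModule a c).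
Qed.

Lemma lim_mult (f g : T -> R) a c :
  filterlim f F (locally a) -> filterlim g F (locally c) ->
  filterlim (fun x => f x * g x) F (locally (a * c)).
Proof.
  intros Hf Hg.
  apply (filterlim_comp_2 f g Rmult Hf Hg).
  apply (@filterlim_mult R_AbsRing a c).
Qed.

Lemma lim_opp (f : T -> R) a :
  filterlim f F (locally a) -> filterlim (fun x => - f x) F (locally (- a)).
Proof.
  intros Hf. eapply filterlim_comp. apply Hf.
  apply (@filterlim_opp R_AbsRing R_NormedModule a).
Qed.

Lemma lim_cont (f : T -> R) (h : R -> R) a :
  continuous h a -> filterlim f F (locally a) ->
  filterlim (fun x => h (f x)) F (locally (h a)).
Proof. intros Hh Hf. eapply filterlim_comp. apply Hf. apply Hh. Qed.

Lemma lim_const (a : R) : filterlim (fun _ : T => a) F (locally a).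
Proof. apply filterlim_const. Qed.

Lemma lim_pair (f g : T -> R) a c :
  filterlim f F (locally a) -> filterlim g F (locally c) ->
  filterlim (fun x => ((f x, g x) : C)) F (locally ((a, c) : C)).
Proof.
  intros Hf Hg. apply filterlim_locally. intros eps.
  apply filterlim_locally with (eps := eps) in Hf.
  apply filterlim_locally with (eps := eps) in Hg.
  generalize (filter_and _ _ Hf Hg). apply filter_imp.
  intros x [H1 H2]. split; assumption.
Qed.

Lemma lim_fst (f : T -> C) z :
  filterlim f F (locally z) -> filterlim (fun x => fst (f x)) F (locally (fst z)).
Proof.
  intros Hf. apply filterlim_locally. intros eps.
  apply filterlim_locally with (eps := eps) in Hf.
  revert Hf. apply filter_imp. intros x [H1 H2]. exact H1.
Qed.

Lemma lim_snd (f : T -> C) z :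
  filterlim f F (locally z) -> filterlim (fun x => snd (f x)) F (locally (snd z)).
Proof.
  intros Hf. apply filterlim_locally. intros eps.
  apply filterlim_locally with (eps := eps) in Hf.
  revert Hf. apply filter_imp. intros x [H1 H2]. exact H2.
Qed.

Lemma lim_Cmod (f : T -> C) z :
  filterlim f F (locally z) -> filterlim (fun x => Cmod (f x)) F (locally (Cmod z)).
Proof.
  intros Hf. unfold Cmod.
  assert (E : forall w : C, fst w ^ 2 + snd w ^ 2 = fst w * fst w + snd w * snd w) by (intros; ring).
  rewrite E.
  apply (filterlim_ext (fun x => sqrt (fst (f x) * fst (f x) + snd (f x) * snd (f x)))).
  { intros x. rewrite E. reflexivity. }
  apply (lim_cont (fun x => fst (f x) * fst (f x) + snd (f x) * snd (f x)) sqrt).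
  apply continuous_sqrt.
  apply lim_plus; apply lim_mult.
  all: first [ apply (lim_fst f z Hf) | apply (lim_snd f z Hf) ].
Qed.

End Tool.

Lemma Cmod_sq (z : C) : Cmod z ^ 2 = fst z ^ 2 + snd z ^ 2.
Proof. unfold Cmod. apply pow2_sqrt. nra. Qed.

Lemma Cmod_eq1 (a c : R) : a ^ 2 + c ^ 2 = 1 -> Cmod ((a, c) : C) = 1.
Proof. intros H. unfold Cmod. simpl fst; simpl snd. rewrite H. apply sqrt_1. Qed.

Lemma Cmod_ge0' (z : C) : 0 <= Cmod z.
Proof. unfold Cmod. apply sqrt_pos. Qed.

Lemma Cmod_pos (z : C) : z <> RtoC 0 -> 0 < Cmod z.
Proof.
  intros Hz. destruct (Cmod_ge0' z) as [H|H]; auto.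
  exfalso. apply Hz. assert (E := Cmod_sq z). rewrite <- H in E.
  destruct z as [a c]; simpl in E. unfold RtoC. f_equal; nra.
Qed.

Definition arg_of (c : C) : R :=
  if Rle_dec 0 (snd c) then acos (fst c) else - acos (fst c).

Lemma arg_of_spec (c : C) : Cmod c = 1 ->
  cos (arg_of c) = fst c /\ sin (arg_of c) = snd c.
Proof.
  intros H. assert (E := Cmod_sq c). rewrite H in E.
  destruct c as [a d]; simpl in *.
  assert (Ha : -1 <= a <= 1) by nra.
  assert (Hs : sqrt (1 - a²) = Rabs d).
  { rewrite <- sqrt_Rsqr_abs. f_equal. unfold Rsqr. nra. }
  unfold arg_of; simpl. destruct (Rle_dec 0 d).
  - rewrite cos_acos, sin_acos by auto. rewrite Hs, Rabs_right by lra. auto.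
  - rewrite cos_neg, sin_neg, cos_acos, sin_acos by auto. rewrite Hs, Rabs_left by lra.
    split; [auto|ring].
Qed.

Definition ux (z : C) : R := fst z / Cmod z.
Definition uy (z : C) : R := snd z / Cmod z.

Definition Gfun (g : R) (z : C) : C :=
  ((- (ux z * cos (g * (2 - 2 * Cmod z)) - uy z * sin (g * (2 - 2 * Cmod z)))),
   (- (ux z * sin (g * (2 - 2 * Cmod z)) + uy z * cos (g * (2 - 2 * Cmod z))))).

Definition gam (P : C) (z : C) : R :=
  arg_of ((- (fst P * ux z + snd P * uy z)), (fst P * uy z - snd P * ux z)).

Lemma u_norm (z : C) : z <> RtoC 0 -> ux z ^ 2 + uy z ^ 2 = 1.
Proof.
  intros Hz. assert (P := Cmod_pos z Hz). assert (E := Cmod_sq z).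
  unfold ux, uy. field_simplify; [|lra]. rewrite <- E. field. lra.
Qed.

Lemma Gfun_mod (g : R) (z : C) : z <> RtoC 0 -> Cmod (Gfun g z) = 1.
Proof.
  intros Hz. assert (U := u_norm z Hz). unfold Gfun. apply Cmod_eq1.
  set (t := g * (2 - 2 * Cmod z)). assert (CS := sin2_cos2 t). unfold Rsqr in CS.
  nra.
Qed.

Lemma Gfun_one (g : R) (z : C) : Cmod z = 1 -> Gfun g z = ((- fst z), (- snd z)).
Proof.
  intros H. unfold Gfun. rewrite H.
  replace (g * (2 - 2 * 1)) with 0 by ring. rewrite cos_0, sin_0.
  unfold ux, uy. rewrite H. f_equal; field.
Qed.

Lemma Gfun_half (P : C) (z : C) : Cmod z = 1/2 -> Cmod P = 1 -> Gfun (gam P z) z = P.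
Proof.
  intros Hz HP.
  assert (Hz0 : z <> RtoC 0).
  { intros E; subst. rewrite Cmod_0 in Hz. lra. }
  assert (U := u_norm z Hz0).
  assert (EP := Cmod_sq P). rewrite HP in EP.
  unfold Gfun. rewrite Hz. replace (gam P z * (2 - 2 * (1/2))) with (gam P z) by field.
  unfold gam. destruct (arg_of_spec ((- (fst P * ux z + snd P * uy z)), (fst P * uy z - snd P * ux z))) as [C1 S1].
  { apply Cmod_eq1. nra. }
  rewrite C1, S1. simpl. destruct P as [p1 p2]; simpl in *. f_equal.
  - transitivity (p1 * (ux z * (ux z * 1) + uy z * (uy z * 1))); [ring | rewrite U; ring].
  - transitivity (p2 * (ux z * (ux z * 1) + uy z * (uy z * 1))); [ring | rewrite U; ring].
Qed.

Lemma Gfun_cont (g : R) (z0 : C) : z0 <> RtoC 0 ->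
  filterlim (Gfun g) (locally z0) (locally (Gfun g z0)).
Proof.
  intros Hz. assert (Hp := Cmod_pos z0 Hz).
  assert (Hid : filterlim (fun z : C => z) (locally z0) (locally z0)) by (apply filterlim_id).
  assert (Hm := lim_Cmod (fun z => z) z0 Hid).
  assert (Hf := lim_fst (fun z => z) z0 Hid).
  assert (Hs := lim_snd (fun z => z) z0 Hid).
  simpl in Hm, Hf, Hs.
  assert (Hi : filterlim (fun z : C => / Cmod z) (locally z0) (locally (/ Cmod z0))).
  { apply (lim_cont (fun z => Cmod z) Rinv). apply continuous_Rinv. intro; lra. exact Hm. }
  assert (Hux : filterlim ux (locally z0) (locally (ux z0))).
  { unfold ux, Rdiv. apply (lim_mult (fun z : C => fst z) (fun z : C => / Cmod z)); auto. }
  assert (Huy : filterlim uy (locally z0) (locally (uy z0))).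
  { unfold uy, Rdiv. apply (lim_mult (fun z : C => snd z) (fun z : C => / Cmod z)); auto. }
  assert (Ht : filterlim (fun z => g * (2 - 2 * Cmod z)) (locally z0) (locally (g * (2 - 2 * Cmod z0)))).
  { apply lim_mult. apply lim_const. unfold Rminus. apply lim_plus. apply lim_const.
    apply lim_opp. apply lim_mult. apply lim_const. auto. }
  assert (Hc : filterlim (fun z => cos (g * (2 - 2 * Cmod z))) (locally z0) (locally (cos (g * (2 - 2 * Cmod z0))))).
  { apply (lim_cont (fun z => g * (2 - 2 * Cmod z)) cos). apply continuous_cos. auto. }
  assert (Hsn : filterlim (fun z => sin (g * (2 - 2 * Cmod z))) (locally z0) (locally (sin (g * (2 - 2 * Cmod z0))))).
  { apply (lim_cont (fun z => g * (2 - 2 * Cmod z)) sin). apply continuous_sin. auto. }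
  unfold Gfun. apply lim_pair; apply lim_opp; unfold Rminus.
  - apply lim_plus. apply lim_mult; auto. apply lim_opp. apply lim_mult; auto.
  - apply lim_plus; apply lim_mult; auto.
Qed.

Definition hitT (Q : R -> Prop) (a : Rbar) : Rbar :=
  match a with Finite a => Glb_Rbar (fun s => a <= s /\ Q s) | _ => p_infty end.

Lemma hit_ge Q a : Rbar_le a (hitT Q a).
Proof.
  destruct a as [a| |]; simpl; auto.
  destruct (Glb_Rbar_correct (fun s => a <= s /\ Q s)) as [_ H2].
  apply (H2 (Finite a)). intros x [Hx _]. simpl. exact Hx.
Qed.

Lemma hit_lb Q a s : a <= s -> Rbar_lt (Finite s) (hitT Q (Finite a)) -> ~ Q s.
Proof.
  intros Ha Hs HQ. unfold hitT in Hs.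
  destruct (Glb_Rbar_correct (fun s => a <= s /\ Q s)) as [H1 _].
  specialize (H1 s (conj Ha HQ)).
  apply (Rbar_lt_not_le _ _ Hs H1).
Qed.

Lemma hit_char Q a h : a <= h -> Q h -> (forall s, a <= s < h -> ~ Q s) ->
  hitT Q (Finite a) = Finite h.
Proof.
  intros Hah HQ Hn. simpl. apply is_glb_Rbar_unique. split.
  - intros x [Hx HQx]. simpl. destruct (Rle_dec h x) as [|Hlt]; auto.
    exfalso. apply (Hn x); auto. lra.
  - intros l Hl. apply Hl. auto.
Qed.

Lemma hit_approx Q a h : hitT Q (Finite a) = Finite h ->
  forall eps, 0 < eps -> exists s, h <= s < h + eps /\ a <= s /\ Q s.
Proof.
  intros Hh eps He. simpl in Hh.
  destruct (Glb_Rbar_correct (fun s => a <= s /\ Q s)) as [H1 H2].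
  rewrite Hh in H1, H2.
  destruct (classic (exists s, (a <= s /\ Q s) /\ s < h + eps)) as [[s [[Hs1 Hs2] Hs3]]|Hno].
  - exists s. specialize (H1 s (conj Hs1 Hs2)). simpl in H1. repeat split; auto.
  - exfalso. assert (Hl : is_lb_Rbar (fun s => a <= s /\ Q s) (Finite (h + eps))).
    { intros x Hx. simpl. destruct (Rle_dec (h + eps) x); auto.
      exfalso. apply Hno. exists x. split; auto. lra. }
    specialize (H2 _ Hl). simpl in H2. lra.
Qed.

Definition Qj (b : R -> C) (j : nat) (s : R) : Prop :=
  if Nat.even j then 1/2 <= Cmod (b s) else Cmod (b s) <= 1/3.

Fixpoint st (b : R -> C) (j : nat) : Rbar * C :=
  match j with
  | O => (Finite 0, RtoC 1)
  | S j' => let TP := st b j' in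
      let T' := hitT (Qj b j') (fst TP) in
      (T', if Nat.even j' then snd TP
           else Gfun (gam (snd TP) (b (real (fst TP)))) (b (real T')))
  end.

Definition Tt b j := fst (st b j).
Definition Pp b j := snd (st b j).

Lemma Tt_S b j : Tt b (S j) = hitT (Qj b j) (Tt b j).
Proof. reflexivity. Qed.
Lemma Pp_S b j : Pp b (S j) = if Nat.even j then Pp b j
   else Gfun (gam (Pp b j) (b (real (Tt b j)))) (b (real (Tt b (S j)))).
Proof. reflexivity. Qed.
Lemma Tt_0 b : Tt b 0 = Finite 0. Proof. reflexivity. Qed.
Lemma Pp_0 b : Pp b 0 = RtoC 1. Proof. reflexivity. Qed.

Definition value (b : R -> C) (j : nat) (s : R) : C :=
  if Nat.even j then Pp b j else Gfun (gam (Pp b j) (b (real (Tt b j)))) (b s).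

Definition inEp (b : R -> C) (j : nat) (t : R) : Prop :=
  Rbar_le (Tt b j) (Finite t) /\ Rbar_lt (Finite t) (Tt b (S j)).

Definition Mf (b : R -> C) (t : R) : C :=
  match excluded_middle_informative (exists j, inEp b j t) with
  | left H => value b (proj1_sig (constructive_indefinite_description _ H)) t
  | right _ => RtoC 1
  end.

Lemma Tt_mono b i j : (i <= j)%nat -> Rbar_le (Tt b i) (Tt b j).
Proof.
  induction 1. apply Rbar_le_refl.
  eapply Rbar_le_trans. apply IHle. rewrite Tt_S. apply hit_ge.
Qed.

Lemma inEp_unique b i j t : inEp b i t -> inEp b j t -> i = j.
Proof.
  intros [H1 H2] [H3 H4].
  destruct (Nat.lt_trichotomy i j) as [Hij|[Hij|Hij]]; auto; exfalso.
  - assert (M := Tt_mono b (S i) j Hij).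
    apply (Rbar_lt_not_le _ _ H2). eapply Rbar_le_trans; eauto.
  - assert (M := Tt_mono b (S j) i Hij).
    apply (Rbar_lt_not_le _ _ H4). eapply Rbar_le_trans; eauto.
Qed.

Lemma Mf_eq b j t : inEp b j t -> Mf b t = value b j t.
Proof.
  intros H. unfold Mf. destruct (excluded_middle_informative _) as [E|E].
  - destruct (constructive_indefinite_description _ E) as [k Hk]. simpl.
    rewrite (inEp_unique b k j t Hk H). reflexivity.
  - exfalso; apply E; eauto.
Qed.

Definition Fw (t : R) := within (fun s : R => 0 <= s) (locally t).

Lemma Fw_filter t : Filter (Fw t).
Proof. unfold Fw. apply within_filter. apply locally_filter. Qed.

Lemma Fw_eps (f : R -> R) t : filterlim f (Fw t) (locally (f t)) ->
  forall eps, 0 < eps -> exists d, 0 < d /\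
    forall s, 0 <= s -> Rabs (s - t) < d -> Rabs (f s - f t) < eps.
Proof.
  intros H eps He.
  assert (FF := Fw_filter t).
  destruct (proj1 (filterlim_locally f (f t)) H (mkposreal eps He)) as [d Hd].
  exists d. split. apply cond_pos. intros s Hs Hst. apply (Hd s Hst Hs).
Qed.

Lemma Fw_epsC (f : R -> C) t : filterlim f (Fw t) (locally (f t)) ->
  forall eps, 0 < eps -> exists d, 0 < d /\
    forall s, 0 <= s -> Rabs (s - t) < d ->
      Rabs (fst (f s) - fst (f t)) < eps /\ Rabs (snd (f s) - snd (f t)) < eps.
Proof.
  intros H eps He.
  assert (FF := Fw_filter t).
  destruct (proj1 (filterlim_locally f (f t)) H (mkposreal eps He)) as [d Hd].
  exists d. split. apply cond_pos. intros s Hs Hst. apply (Hd s Hst Hs).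
Qed.

Definition lev (j : nat) : R :=
  match j with O => 0 | S _ => if Nat.even j then 1/3 else 1/2 end.

Section PathB.
Variable b : R -> C.
Hypothesis Hb : is_path_from disk (RtoC 0) b.

Lemma b_cont t : 0 <= t -> filterlim b (Fw t) (locally (b t)).
Proof. intros Ht. apply Hb. auto. Qed.

Lemma f_cont t : 0 <= t -> filterlim (fun s => Cmod (b s)) (Fw t) (locally (Cmod (b t))).
Proof. intros Ht. assert (FF := Fw_filter t). apply lim_Cmod. apply b_cont; auto. Qed.

Lemma f_eps t : 0 <= t -> forall eps, 0 < eps -> exists d, 0 < d /\
    forall s, 0 <= s -> Rabs (s - t) < d -> Rabs (Cmod (b s) - Cmod (b t)) < eps.
Proof. intros Ht. apply (Fw_eps (fun s => Cmod (b s))). apply f_cont; auto. Qed.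

Lemma closed_ge r h : 0 <= h ->
  (forall eps, 0 < eps -> exists s, 0 <= s /\ Rabs (s - h) < eps /\ r <= Cmod (b s)) ->
  r <= Cmod (b h).
Proof.
  intros Hh H. destruct (Rle_dec r (Cmod (b h))) as [|Hn]; auto. exfalso.
  destruct (f_eps h Hh (r - Cmod (b h))) as [d [Hd Hd']]. lra.
  destruct (H d Hd) as [s [Hs1 [Hs2 Hs3]]].
  specialize (Hd' s Hs1 Hs2). apply Rabs_def2 in Hd'. lra.
Qed.

Lemma closed_le r h : 0 <= h ->
  (forall eps, 0 < eps -> exists s, 0 <= s /\ Rabs (s - h) < eps /\ Cmod (b s) <= r) ->
  Cmod (b h) <= r.
Proof.
  intros Hh H. destruct (Rle_dec (Cmod (b h)) r) as [|Hn]; auto. exfalso.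
  destruct (f_eps h Hh (Cmod (b h) - r)) as [d [Hd Hd']]. lra.
  destruct (H d Hd) as [s [Hs1 [Hs2 Hs3]]].
  specialize (Hd' s Hs1 Hs2). apply Rabs_def2 in Hd'. lra.
Qed.

Lemma left_le r a h : 0 <= a < h -> (forall s, a <= s < h -> Cmod (b s) < r) -> Cmod (b h) <= r.
Proof.
  intros Hah H. apply closed_le. lra. intros eps He.
  exists (Rmax a (h - eps / 2)). 
  assert (a <= Rmax a (h - eps/2)) by apply Rmax_l.
  assert (h - eps/2 <= Rmax a (h - eps/2)) by apply Rmax_r.
  assert (Rmax a (h - eps/2) < h) by (apply Rmax_lub_lt; lra).
  split. lra. split. rewrite Rabs_left by lra. lra.
  left. apply H. lra.
Qed.

Lemma left_ge r a h : 0 <= a < h -> (forall s, a <= s < h -> r < Cmod (b s)) -> r <= Cmod (b h).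
Proof.
  intros Hah H. apply closed_ge. lra. intros eps He.
  exists (Rmax a (h - eps / 2)). 
  assert (a <= Rmax a (h - eps/2)) by apply Rmax_l.
  assert (h - eps/2 <= Rmax a (h - eps/2)) by apply Rmax_r.
  assert (Rmax a (h - eps/2) < h) by (apply Rmax_lub_lt; lra).
  split. lra. split. rewrite Rabs_left by lra. lra.
  left. apply H. lra.
Qed.

Lemma hitQ j a h : 0 <= a -> hitT (Qj b j) (Finite a) = Finite h -> Qj b j h.
Proof.
  intros Ha Hh.
  assert (Hah : Rbar_le (Finite a) (Finite h)) by (rewrite <- Hh; apply hit_ge). simpl in Hah.
  assert (Ap := hit_approx _ _ _ Hh).
  unfold Qj in *. destruct (Nat.even j).
  - apply closed_ge. lra. intros eps He. destruct (Ap eps He) as [s [Hs1 [Hs2 Hs3]]].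
    exists s. split. lra. split. rewrite Rabs_right by lra. lra. auto.
  - apply closed_le. lra. intros eps He. destruct (Ap eps He) as [s [Hs1 [Hs2 Hs3]]].
    exists s. split. lra. split. rewrite Rabs_right by lra. lra. auto.
Qed.

Lemma hit_strict j a : 0 <= a -> ~ Qj b j a -> Rbar_lt (Finite a) (hitT (Qj b j) (Finite a)).
Proof.
  intros Ha Hn. assert (G := hit_ge (Qj b j) (Finite a)).
  destruct (hitT (Qj b j) (Finite a)) as [h| |] eqn:E; simpl in *; auto.
  destruct G as [G|G]; auto. subst. exfalso. apply Hn. apply (hitQ j h h); auto.
Qed.

Definition Inv (j : nat) : Prop :=
  match Tt b j with
  | Finite a => 0 <= a /\ Cmod (Pp b j) = 1 /\ Cmod (b a) = lev j
  | p_infty => True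
  | m_infty => False
  end.

Lemma b0 : b 0 = RtoC 0.
Proof. apply Hb. Qed.

Lemma lev_notQ j a : Cmod (b a) = lev j -> ~ Qj b j a.
Proof.
  intros E. unfold Qj, lev in *. destruct j as [|j].
  - simpl. lra.
  - destruct (Nat.even (S j)); lra.
Qed.

Lemma Inv_all j : Inv j.
Proof.
  induction j as [|j IH].
  - unfold Inv. rewrite Tt_0. split. lra. split. rewrite Pp_0. unfold RtoC. 
    apply Cmod_eq1. simpl; ring. rewrite b0. rewrite Cmod_0. reflexivity.
  - unfold Inv in *. rewrite Tt_S. destruct (Tt b j) as [a| |] eqn:Ea; [ | simpl; auto | tauto ].
    destruct IH as [Ha [HP Hl]].
    assert (Hs := hit_strict j a Ha (lev_notQ j a Hl)).
    destruct (hitT (Qj b j) (Finite a)) as [h| |] eqn:Eh; simpl in Hs; auto.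
    assert (HQ := hitQ j a h Ha Eh).
    assert (Hn : forall s, a <= s < h -> ~ Qj b j s).
    { intros s Hs'. apply hit_lb with (a := a). lra. rewrite Eh. simpl. lra. }
    split. lra.
    assert (Hlev : Cmod (b h) = lev (S j)).
    { unfold Qj, lev in *. rewrite Nat.even_succ, <- Nat.negb_even.
      destruct (Nat.even j); simpl.
      - apply Rle_antisym; auto. apply (left_le _ a h). lra.
        intros s Hs'. specialize (Hn s Hs'). lra.
      - apply Rle_antisym; auto. apply (left_ge _ a h). lra.
        intros s Hs'. specialize (Hn s Hs'). lra. }
    split; auto.
    rewrite Pp_S. rewrite Tt_S, Ea. rewrite Eh. simpl real.
    destruct (Nat.even j); auto.
    apply Gfun_mod. intros E. rewrite E, Cmod_0 in Hlev. unfold lev in Hlev.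
    destruct (Nat.even (S j)); lra.
Qed.

End PathB.

Lemma even_2N N : Nat.even (2 * N) = true.
Proof. induction N. reflexivity. replace (2 * S N)%nat with (S (S (2 * N))) by lia. simpl. auto. Qed.

Section PathB2.
Variable b : R -> C.
Hypothesis Hb : is_path_from disk (RtoC 0) b.

Lemma Tt_fin j t : Rbar_le (Tt b j) (Finite t) -> exists a, Tt b j = Finite a /\ 0 <= a /\ a <= t
   /\ Cmod (Pp b j) = 1 /\ Cmod (b a) = lev j.
Proof.
  intros H. assert (I := Inv_all b Hb j). unfold Inv in I.
  destruct (Tt b j) as [a| |]; simpl in H; try tauto.
  exists a. tauto.
Qed.

Lemma Tt_strict j a : Tt b j = Finite a -> Rbar_lt (Finite a) (Tt b (S j)).
Proof.
  intros E. assert (I := Inv_all b Hb j). unfold Inv in I. rewrite E in I.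
  rewrite Tt_S, E. apply hit_strict; auto. tauto. apply lev_notQ. tauto.
Qed.

Lemma inEp_info j s : inEp b j s -> 0 <= s /\
  (Nat.even j = true -> Cmod (b s) < 1/2) /\ (Nat.even j = false -> 1/3 < Cmod (b s)).
Proof.
  intros [H1 H2]. destruct (Tt_fin j s H1) as [a [Ea [Ha [Has _]]]].
  rewrite Tt_S, Ea in H2.
  assert (Hn := hit_lb _ _ _ Has H2). unfold Qj in Hn.
  split. lra. split; intros E; rewrite E in Hn; lra.
Qed.

Lemma coverage t : 0 <= t -> exists j, inEp b j t.
Proof.
  intros Ht. apply NNPP. intros Hno.
  assert (All : forall j, Rbar_le (Tt b j) (Finite t)).
  { induction j as [|j IH]. rewrite Tt_0. simpl. auto.
    apply Rbar_not_lt_le. intros Hlt. apply Hno. exists j. split; auto. }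
  set (r := fun j => real (Tt b j)).
  assert (Er : forall j, Tt b j = Finite (r j) /\ Cmod (b (r j)) = lev j).
  { intros j. destruct (Tt_fin j t (All j)) as [a [Ea [_ [_ [_ Hl]]]]].
    unfold r. rewrite Ea. simpl. auto. }
  assert (Gr : Un_growing r).
  { intros n. assert (M := Tt_mono b n (S n) (le_S _ _ (le_n n))).
    rewrite (proj1 (Er n)), (proj1 (Er (S n))) in M. exact M. }
  assert (Ub : has_ub r).
  { exists t. intros x [i ->]. assert (M := All i). rewrite (proj1 (Er i)) in M. exact M. }
  destruct (growing_cv r Gr Ub) as [L HL].
  assert (HL0 : 0 <= L).
  { assert (G := growing_ineq r L Gr HL 0). unfold r in G. rewrite Tt_0 in G. simpl in G. lra. }
  destruct (f_eps b Hb L HL0 (1/24)) as [d [Hd Hd']]. lra.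
  destruct (HL d Hd) as [N HN].
  assert (Hpos : forall n, 0 <= r n).
  { intros n. assert (M := Tt_mono b 0 n (Nat.le_0_l n)). rewrite Tt_0, (proj1 (Er n)) in M. exact M. }
  assert (A1 := Hd' (r (S (2 * N))) (Hpos _) (HN (S (2 * N)) ltac:(lia))).
  assert (A2 := Hd' (r (S (S (2 * N)))) (Hpos _) (HN (S (S (2 * N))) ltac:(lia))).
  rewrite (proj2 (Er _)) in A1. rewrite (proj2 (Er _)) in A2. unfold lev in A1, A2.
  replace (Nat.even (S (S (2 * N)))) with true in A2 by (symmetry; exact (even_2N N)).
  replace (Nat.even (S (2 * N))) with false in A1 by (rewrite Nat.even_succ, <- Nat.negb_even, even_2N; auto).
  apply Rabs_def2 in A1. apply Rabs_def2 in A2. lra.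
Qed.

Lemma value_cont j s0 : 0 <= s0 -> (Nat.even j = false -> b s0 <> RtoC 0) ->
  filterlim (value b j) (Fw s0) (locally (value b j s0)).
Proof.
  intros Hs Hnz. unfold value. destruct (Nat.even j) eqn:E.
  - apply filterlim_const.
  - eapply filterlim_comp. apply b_cont; auto. apply Gfun_cont. auto.
Qed.

Lemma value_start j a : Tt b j = Finite a -> value b j a = Pp b j.
Proof.
  intros E. unfold value. destruct (Nat.even j) eqn:Ej; auto.
  assert (I := Inv_all b Hb j). unfold Inv in I. rewrite E in I. destruct I as [_ [HP Hl]].
  rewrite E. simpl real. apply Gfun_half; auto. rewrite Hl. unfold lev.
  destruct j. simpl in Ej. discriminate. rewrite Ej. reflexivity.
Qed.

Lemma value_end j h : Tt b (S j) = Finite h -> value b j h = Pp b (S j).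
Proof.
  intros E. rewrite Pp_S. unfold value. rewrite E. simpl real. reflexivity.
Qed.

End PathB2.

Lemma piece (M f g : R -> C) t :
  filterlim f (Fw t) (locally (M t)) -> filterlim g (Fw t) (locally (M t)) ->
  (exists d, 0 < d /\ forall s, 0 <= s -> Rabs (s - t) < d -> M s = f s \/ M s = g s) ->
  filterlim M (Fw t) (locally (M t)).
Proof.
  intros Hf Hg [d [Hd Hd']]. assert (FF := Fw_filter t).
  apply filterlim_locally. intros eps.
  apply filterlim_locally with (eps := eps) in Hf.
  apply filterlim_locally with (eps := eps) in Hg.
  assert (Hn : Fw t (fun s => M s = f s \/ M s = g s)).
  { exists (mkposreal d Hd). intros s Hs Hs0. apply Hd'; auto. }
  generalize (filter_and _ _ (filter_and _ _ Hf Hg) Hn). apply filter_imp.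
  intros s [[H1 H2] [E|E]]; rewrite E; auto.
Qed.

Lemma Rbar_nbhd_lt (t : R) (T : Rbar) : Rbar_lt (Finite t) T ->
  exists d, 0 < d /\ forall s, Rabs (s - t) < d -> Rbar_lt (Finite s) T.
Proof.
  destruct T as [h| |]; simpl; intros H.
  - exists (h - t). split. lra. intros s Hs. apply Rabs_def2 in Hs. lra.
  - exists 1. split. lra. auto.
  - contradiction.
Qed.

Lemma lev_S_nz i : lev (S i) <> 0.
Proof. unfold lev. destruct (Nat.even (S i)); lra. Qed.

Lemma Cmod_nz (z : C) : Cmod z <> 0 -> z <> RtoC 0.
Proof. intros H E. apply H. rewrite E. apply Cmod_0. Qed.

Section PathB3.
Variable b : R -> C.
Hypothesis Hb : is_path_from disk (RtoC 0) b.

Lemma Mf_cont t : 0 <= t -> filterlim (Mf b) (Fw t) (locally (Mf b t)).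
Proof.
  intros Ht. destruct (coverage b Hb t Ht) as [j Hj].
  assert (Hj' := Hj). destruct Hj' as [H1 H2].
  destruct (Tt_fin b Hb j t H1) as [a [Ea [Ha [Hat [HP Hl]]]]].
  destruct (inEp_info b Hb j t Hj) as [_ [Iev Iodd]].
  destruct (Rle_lt_or_eq_dec a t Hat) as [Hlt|Heq].
  - apply (piece (Mf b) (value b j) (value b j)).
    1,2: rewrite (Mf_eq b j t Hj); apply value_cont; auto;
         intros E; apply Cmod_nz; specialize (Iodd E); lra.
    destruct (Rbar_nbhd_lt t _ H2) as [d [Hd Hd']].
    exists (Rmin d (t - a)). split. apply Rmin_pos; lra.
    intros s Hs Hst. left. apply Mf_eq. split.
    + rewrite Ea. simpl. assert (Rabs (s - t) < t - a) by (eapply Rlt_le_trans; [apply Hst|apply Rmin_r]).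
      apply Rabs_def2 in H. lra.
    + apply Hd'. eapply Rlt_le_trans; [apply Hst|apply Rmin_l].
  - subst a. destruct j as [|i].
    + rewrite Tt_0 in Ea. injection Ea as Ea. subst t.
      apply (piece (Mf b) (value b 0) (value b 0)).
      1,2: rewrite (Mf_eq b 0 0 Hj); apply value_cont; auto; simpl; discriminate.
      destruct (Rbar_nbhd_lt 0 _ H2) as [d [Hd Hd']].
      exists d. split; auto. intros s Hs Hst. left. apply Mf_eq. split.
      rewrite Tt_0. simpl. auto. apply Hd'. auto.
    + assert (Hbt : b t <> RtoC 0) by (apply Cmod_nz; rewrite Hl; apply lev_S_nz).
      destruct (Tt_fin b Hb i t) as [a' [Ea' [Ha' [Ha't _]]]].
      { eapply Rbar_le_trans. apply Tt_mono. apply le_S, le_n. rewrite Ea. simpl. lra. }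
      assert (Hs := Tt_strict b Hb i a' Ea'). rewrite Ea in Hs. simpl in Hs.
      assert (Vs := value_start b Hb (S i) t Ea).
      assert (Ve := value_end b i t Ea).
      apply (piece (Mf b) (value b i) (value b (S i))).
      * rewrite (Mf_eq b (S i) t Hj), Vs, <- Ve. apply value_cont; auto.
      * rewrite (Mf_eq b (S i) t Hj). apply value_cont; auto.
      * destruct (Rbar_nbhd_lt t _ H2) as [d [Hd Hd']].
        exists (Rmin d (t - a')). split. apply Rmin_pos; lra.
        intros s Hs0 Hst.
        assert (Hst1 : Rabs (s - t) < t - a') by (eapply Rlt_le_trans; [apply Hst|apply Rmin_r]).
        assert (Hst2 : Rabs (s - t) < d) by (eapply Rlt_le_trans; [apply Hst|apply Rmin_l]).
        apply Rabs_def2 in Hst1.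
        destruct (Rlt_le_dec s t) as [Hlt|Hge].
        -- left. apply Mf_eq. split. rewrite Ea'. simpl. lra. rewrite Ea. simpl. auto.
        -- right. apply Mf_eq. split. rewrite Ea. simpl. auto. apply Hd'. auto.
Qed.

Lemma Mf_info t : 0 <= t -> Cmod (Mf b t) = 1 /\ Mf b t <> b t.
Proof.
  intros Ht. destruct (coverage b Hb t Ht) as [j Hj].
  assert (Hj' := Hj). destruct Hj' as [H1 H2].
  destruct (Tt_fin b Hb j t H1) as [a [Ea [Ha [Hat [HP Hl]]]]].
  destruct (inEp_info b Hb j t Hj) as [_ [Iev Iodd]].
  rewrite (Mf_eq b j t Hj). unfold value.
  destruct (Nat.even j) eqn:E.
  - split; auto. intros Eq. specialize (Iev eq_refl). rewrite <- Eq in Iev. lra.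
  - specialize (Iodd eq_refl).
    assert (Hnz : b t <> RtoC 0) by (apply Cmod_nz; lra).
    split. apply Gfun_mod; auto.
    intros Eq.
    assert (Hm : Cmod (b t) = 1) by (rewrite <- Eq; apply Gfun_mod; auto).
    rewrite Gfun_one in Eq by auto. apply Hnz.
    destruct (b t) as [x y]. simpl in Eq. injection Eq as E1 E2.
    unfold RtoC. f_equal; lra.
Qed.

Lemma Mf_0 : Mf b 0 = RtoC 1.
Proof.
  assert (Hj : inEp b 0 0).
  { split. rewrite Tt_0. simpl. lra. apply (Tt_strict b Hb 0 0). apply Tt_0. }
  rewrite (Mf_eq b 0 0 Hj). reflexivity.
Qed.

End PathB3.

Lemma small_zero x : (forall eps, 0 < eps -> Rabs x < eps) -> x = 0.
Proof.
  intros H. destruct (Req_dec x 0) as [|Hn]; auto. exfalso.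
  specialize (H (Rabs x) (Rabs_pos_lt x Hn)). lra.
Qed.

Section Two.
Variables b b' : R -> C.
Hypothesis Hb : is_path_from disk (RtoC 0) b.
Hypothesis Hb' : is_path_from disk (RtoC 0) b'.
Variable t : R.
Hypothesis Ht : 0 <= t.

Lemma agree_t : 0 < t -> (forall s, 0 <= s < t -> b s = b' s) -> b t = b' t.
Proof.
  intros Htp Hag.
  assert (K : forall eps, 0 < eps -> Rabs (fst (b t) - fst (b' t)) < eps /\ Rabs (snd (b t) - snd (b' t)) < eps).
  { intros eps He.
    destruct (Fw_epsC b t (b_cont b Hb t Ht) (eps/2)) as [d [Hd Hd']]. lra.
    destruct (Fw_epsC b' t (b_cont b' Hb' t Ht) (eps/2)) as [d' [Hd2 Hd2']]. lra.
    set (s := Rmax 0 (t - Rmin d d' / 2)).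
    assert (0 <= s) by apply Rmax_l.
    assert (t - Rmin d d' / 2 <= s) by apply Rmax_r.
    assert (Rmin d d' <= d) by apply Rmin_l.
    assert (Rmin d d' <= d') by apply Rmin_r.
    assert (0 < Rmin d d') by (apply Rmin_pos; lra).
    assert (s < t) by (unfold s; apply Rmax_lub_lt; lra).
    assert (Rabs (s - t) < d) by (rewrite Rabs_left by lra; lra).
    assert (Rabs (s - t) < d') by (rewrite Rabs_left by lra; lra).
    destruct (Hd' s H H5) as [A1 A2]. destruct (Hd2' s H H6) as [B1 B2].
    rewrite (Hag s) in A1, A2 by lra.
    apply Rabs_def2 in A1. apply Rabs_def2 in A2. apply Rabs_def2 in B1. apply Rabs_def2 in B2.
    split; apply Rabs_def1; lra. }
  destruct (b t) as [x y] eqn:E1. destruct (b' t) as [x' y'] eqn:E2. simpl in K.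
  assert (x - x' = 0) by (apply small_zero; intros; apply K; auto).
  assert (y - y' = 0) by (apply small_zero; intros; apply K; auto).
  f_equal; lra.
Qed.

Hypothesis Hag : forall s, 0 <= s <= t -> b s = b' s.

Lemma hit_agree j a (bb bb' : R -> C) : is_path_from disk (RtoC 0) bb ->
  (forall s, 0 <= s <= t -> bb s = bb' s) -> 0 <= a ->
  Rbar_le (hitT (Qj bb j) (Finite a)) (Finite t) ->
  hitT (Qj bb' j) (Finite a) = hitT (Qj bb j) (Finite a).
Proof.
  intros Hbb Hg Ha Hle. assert (G := hit_ge (Qj bb j) (Finite a)).
  destruct (hitT (Qj bb j) (Finite a)) as [h| |] eqn:E; simpl in G, Hle; try tauto.
  apply hit_char. auto.
  - assert (Q := hitQ bb Hbb j a h Ha E). unfold Qj in *. rewrite <- Hg by lra. auto.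
  - intros s Hs. assert (N := hit_lb (Qj bb j) a s (proj1 Hs)). rewrite E in N.
    specialize (N (proj2 Hs)). unfold Qj in *. rewrite <- Hg by lra. auto.
Qed.

Definition AG j := (Tt b j = Tt b' j /\ Pp b j = Pp b' j) \/
                   (Rbar_lt (Finite t) (Tt b j) /\ Rbar_lt (Finite t) (Tt b' j)).

Lemma AG_all j : AG j.
Proof.
  induction j as [|j IH].
  - left. auto.
  - unfold AG in *. rewrite !Tt_S.
    destruct IH as [[E1 E2]|[L1 L2]].
    + rewrite <- E1.
      assert (I := Inv_all b Hb j). unfold Inv in I.
      destruct (Tt b j) as [a| |] eqn:Ea; [ | right; simpl; auto | tauto ].
      destruct I as [Ha _].
      destruct (Rbar_le_dec (hitT (Qj b j) (Finite a)) (Finite t)) as [Hle|Hgt].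
      * left. rewrite (hit_agree j a b b' Hb Hag Ha Hle). split; auto.
        rewrite !Pp_S, <- E2, <- E1, Ea. rewrite !Tt_S, <- E1, Ea.
        rewrite (hit_agree j a b b' Hb Hag Ha Hle).
        destruct (Nat.even j); auto.
        assert (G := hit_ge (Qj b j) (Finite a)).
        destruct (hitT (Qj b j) (Finite a)) as [h| |]; simpl in G, Hle |- *; try tauto.
        rewrite !Hag by lra. reflexivity.
      * apply Rbar_not_le_lt in Hgt. right. split; auto.
        destruct (Rbar_le_dec (hitT (Qj b' j) (Finite a)) (Finite t)) as [Hle'|Hgt'].
        -- exfalso. rewrite (hit_agree j a b' b Hb' (fun s Hs => eq_sym (Hag s Hs)) Ha Hle') in Hgt.
           apply (Rbar_lt_not_le _ _ Hgt Hle').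
        -- apply Rbar_not_le_lt. auto.
    + right. split.
      * eapply Rbar_lt_le_trans. apply L1. apply hit_ge.
      * eapply Rbar_lt_le_trans. apply L2. apply hit_ge.
Qed.

Lemma Mf_agree s : 0 <= s <= t -> Mf b s = Mf b' s.
Proof.
  intros Hs. destruct (coverage b Hb s (proj1 Hs)) as [j Hj].
  destruct Hj as [H1 H2].
  assert (A1 := AG_all j). assert (A2 := AG_all (S j)).
  destruct A1 as [[E1 E2]|[L1 L2]].
  2:{ exfalso. apply (Rbar_lt_not_le _ _ L1). eapply Rbar_le_trans. apply H1. simpl. lra. }
  assert (Hj' : inEp b' j s).
  { split. rewrite <- E1. auto.
    destruct A2 as [[F1 F2]|[L1 L2]]. rewrite <- F1; auto.
    eapply Rbar_le_lt_trans. 2: apply L2. simpl. lra. }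
  rewrite (Mf_eq b j s (conj H1 H2)), (Mf_eq b' j s Hj').
  unfold value. rewrite <- E1, <- E2. destruct (Nat.even j); auto.
  destruct (Tt_fin b Hb j s H1) as [a [Ea [Ha [Has _]]]]. rewrite Ea. simpl real.
  rewrite !Hag by lra. reflexivity.
Qed.

End Two.

Theorem mainTheorem8 :
  exists S : (R -> C) -> (R -> C),
    is_strategy disk (RtoC 1) (RtoC 0) S /\
    (forall b, is_path_from disk (RtoC 0) b ->
       forall t, 0 <= t -> Cmod (S b t) = 1).
Proof.
  exists Mf. split; [split; [|split] | ].
  - intros b Hb. split; [|split].
    + apply Mf_0; auto.
    + intros t Ht. unfold disk. rewrite (proj1 (Mf_info b Hb t Ht)). lra.
    + intros t Ht. apply Mf_cont; auto.
  - intros b Hb t Ht. apply (proj2 (Mf_info b Hb t Ht)).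
  - intros b b' t Hb Hb' Ht Hag s Hs.
    destruct (Rle_lt_or_eq_dec 0 t Ht) as [Htp|Ht0].
    + apply (Mf_agree b b' Hb Hb' t); auto.
      intros u Hu. destruct (Rle_lt_or_eq_dec u t (proj2 Hu)) as [Hl|He].
      * apply Hag. lra.
      * subst u. apply (agree_t b b' Hb Hb' t Ht Htp Hag).
    + subst t. assert (s = 0) by lra. subst s. rewrite !Mf_0; auto.
  - intros b Hb t Ht. apply (proj1 (Mf_info b Hb t Ht)).
Qed.
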